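(* Let $g \ge h \ge 2$ be integers. There is a constant $C>0$ depending only on $g$ and $h$ such that for every infinite $C_h[g]$ set $A$ of positive integers, $$\liminf_{x \to \infty} A(x)\cdot \frac{(x\log x)^{1/h}}{x} \le C,$$ where $A(x) = |\{a \in A : a \le x\}|$ is the counting function of $A$.
   Context: A set of integers $A$ is called a $C_h[g]$ set if for every set $X$ of $h$ integers there do not exist $g$ distinct integers $k_1,\dots,k_g$ such that $X+k_i \subset A$ for all $i=1,\dots,g$ (here $X+k=\{x+k : x\in X\}$). In words, $A$ contains no $g$ distinct translates of a common $h$-element set. *)

(* Defs.v *)
From Stdlib Require Import Reals ZArith List Arith.
Import ListNotations.
Open Scope R_scope.

(* A set of positive integers is encoded by its boolean indicator on nat;
   membership of an integer z in A: z >= 1 and A z. *)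
Definition memZ (A : nat -> bool) (z : Z) : Prop :=
  (0 < z)%Z /\ A (Z.to_nat z) = true.

Definition Chg (h g : nat) (A : nat -> bool) : Prop :=
  forall (X K : list Z),
    NoDup X -> length X = h -> NoDup K -> length K = g ->
    ~ (forall k x, In k K -> In x X -> memZ A (x + k)%Z).

Definition infinite_set (A : nat -> bool) : Prop :=
  forall N : nat, exists n, (N < n)%nat /\ A n = true.

Definition count_upto (A : nat -> bool) (N : nat) : nat :=
  length (filter A (seq 1 N)).

Definition countR (A : nat -> bool) (x : R) : R :=
  INR (count_upto A (Z.to_nat (Int_part x))).

(* liminf_{x -> +oo} f x <= C, unfolded *)
Definition liminf_le (f : R -> R) (C : R) : Prop :=
  forall eps : R, 0 < eps -> forall M : R, exists x : R, M < x /\ f x < C + eps.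

(* Main.v *)
Require Import Defs.
From Stdlib Require Import Reals ZArith List Arith.
From Stdlib Require Import Lia Lra FinFun Classical.
Import ListNotations.
Open Scope bool_scope.
Open Scope R_scope.

Section Comb.
Local Open Scope nat_scope.

Fixpoint tuples (s : list nat) (n : nat) : list (list nat) :=
  match n with 0 => [[]] | S n => flat_map (fun x => map (cons x) (tuples s n)) s end.

Fixpoint nodupb (l : list nat) : bool :=
  match l with [] => true | x :: l => negb (existsb (Nat.eqb x) l) && nodupb l end.

Lemma nodupb_NoDup l : nodupb l = true -> NoDup l.
Proof.
  induction l as [|x l IH]; simpl; intros H. constructor.
  apply andb_prop in H as [H1 H2]. constructor; auto.
  intros Hin. apply Bool.negb_true_iff in H1.
  assert (existsb (Nat.eqb x) l = true) by (apply existsb_exists; exists x; split; auto; apply Nat.eqb_refl).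
  congruence.
Qed.

Lemma tuples_elem s n o : In o (tuples s n) -> length o = n /\ forall x, In x o -> In x s.
Proof.
  revert o; induction n as [|n IH]; simpl; intros o H.
  - destruct H as [H|[]]; subst; simpl; split; auto; intros _ [].
  - apply in_flat_map in H as [x [Hx H]]. apply in_map_iff in H as [o' [<- Ho']].
    destruct (IH _ Ho') as [L I]. simpl; split; auto. intros y [->|Hy]; auto.
Qed.

Definition cntb {X} (P : X -> bool) (l : list X) : nat :=
  list_sum (map (fun x => if P x then 1 else 0) l).

Lemma cntb_len {X} (P : X -> bool) l : cntb P l = length (filter P l).
Proof. induction l; unfold cntb in *; simpl; auto. destruct (P a); simpl; lia. Qed.

Lemma cntb_app {X} (P : X -> bool) l1 l2 : cntb P (l1 ++ l2) = cntb P l1 + cntb P l2.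
Proof. unfold cntb. rewrite map_app, list_sum_app. auto. Qed.

Lemma sum_flat_map {X Y} (f : Y -> nat) (g : X -> list Y) l :
  list_sum (map f (flat_map g l)) = list_sum (map (fun x => list_sum (map f (g x))) l).
Proof. induction l; simpl; auto. rewrite map_app, list_sum_app. lia. Qed.

Lemma sum_le {X} (f g : X -> nat) l : (forall x, In x l -> f x <= g x) ->
  list_sum (map f l) <= list_sum (map g l).
Proof. induction l; simpl; intros; auto. specialize (IHl (fun x H' => H x (or_intror H'))).
  specialize (H a (or_introl eq_refl)). lia. Qed.

Lemma sum_add {X} (f g : X -> nat) l :
  list_sum (map (fun x => f x + g x) l) = list_sum (map f l) + list_sum (map g l).
Proof. induction l; simpl; auto. lia. Qed.

Lemma sum_scal {X} (c : nat) (f : X -> nat) l :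
  list_sum (map (fun x => c * f x) l) = c * list_sum (map f l).
Proof. induction l; simpl; auto. lia. Qed.

Lemma sum_const {X} (c : nat) (l : list X) : list_sum (map (fun _ => c) l) = c * length l.
Proof. induction l; simpl; auto. lia. Qed.

Lemma sum_swap {X Y} (f : X -> Y -> nat) l1 l2 :
  list_sum (map (fun x => list_sum (map (f x) l2)) l1) =
  list_sum (map (fun y => list_sum (map (fun x => f x y) l1)) l2).
Proof.
  induction l1; simpl. { induction l2; simpl; auto. }
  rewrite IHl1. rewrite <- sum_add. auto.
Qed.



Lemma cnt_all (q : nat -> bool) s n :
  cntb (forallb q) (tuples s n) = (cntb q s) ^ n.
Proof.
  induction n; simpl. { unfold cntb; simpl; auto. }
  unfold cntb at 1. rewrite sum_flat_map.
  transitivity (list_sum (map (fun x => (if q x then 1 else 0) * cntb q s ^ n) s)).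
  - f_equal. apply map_ext. intros x. rewrite <- IHn. unfold cntb.
    rewrite map_map. simpl. destruct (q x); simpl.
    + lia.
    + rewrite sum_const; lia.
  - set (K := cntb q s ^ n). clearbody K. unfold cntb. clear IHn. induction s; simpl; auto. rewrite IHs. destruct (q a); lia.
Qed.

Lemma cntb_split {X} (P Q : X -> bool) l :
  cntb P l = cntb (fun x => P x && Q x) l + cntb (fun x => P x && negb (Q x)) l.
Proof. induction l; unfold cntb in *; simpl; auto. destruct (P a), (Q a); simpl; lia. Qed.

Lemma cntb_le {X} (P Q : X -> bool) l : (forall x, In x l -> P x = true -> Q x = true) ->
  cntb P l <= cntb Q l.
Proof. intros H. apply sum_le. intros x Hx. specialize (H x Hx). destruct (P x), (Q x); auto; discriminate H; auto. Qed.

Lemma cntb_in_le (s o : list nat) : NoDup s ->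
  cntb (fun x => existsb (Nat.eqb x) o) s <= length o.
Proof.
  intros Hs. rewrite cntb_len. apply NoDup_incl_length. now apply NoDup_filter.
  intros x Hx. apply filter_In in Hx as [_ Hx]. apply existsb_exists in Hx as [y [Hy E]].
  apply Nat.eqb_eq in E; subst; auto.
Qed.

Lemma bad_rec (q : nat -> bool) s n : NoDup s ->
  cntb (fun o => forallb q o && negb (nodupb o)) (tuples s (S n)) <=
  cntb q s * cntb (fun o => forallb q o && negb (nodupb o)) (tuples s n) + n * (cntb q s) ^ n.
Proof.
  intros Hs. simpl. unfold cntb at 1. rewrite sum_flat_map.
  set (B := cntb (fun o => forallb q o && negb (nodupb o)) (tuples s n)).
  eapply Nat.le_trans.
  { apply sum_le with (g := fun x => (if q x then 1 else 0) * B +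
        list_sum (map (fun o => if q x && forallb q o && existsb (Nat.eqb x) o then 1 else 0) (tuples s n))).
    intros x _. rewrite map_map. simpl. unfold B, cntb.
    destruct (q x); simpl.
    - rewrite Nat.add_0_r, <- sum_add. apply sum_le. intros o _.
      destruct (forallb q o), (existsb (Nat.eqb x) o), (nodupb o); simpl; lia.
    - rewrite sum_const. simpl. lia. }
  rewrite sum_add. apply Nat.add_le_mono.
  - clearbody B. clear Hs. unfold cntb. induction s; simpl; [lia|]. destruct (q a); simpl; lia.
  - rewrite sum_swap. rewrite <- cnt_all. unfold cntb. rewrite <- sum_scal.
    apply sum_le. intros o Ho. destruct (tuples_elem _ _ _ Ho) as [L _].
    destruct (forallb q o) eqn:E.
    + eapply Nat.le_trans; [| apply Nat.eq_le_incl; symmetry; apply Nat.mul_1_r].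
      rewrite <- L. eapply Nat.le_trans; [| apply (cntb_in_le s o Hs)].
      apply sum_le. intros x _. destruct (q x), (existsb (Nat.eqb x) o); simpl; lia.
    + rewrite Nat.mul_0_r. apply Nat.le_0_r.
      eapply Nat.le_antisymm; [|lia].
      eapply Nat.le_trans; [apply sum_le with (g := fun _ => 0)|]; [intros x _; rewrite Bool.andb_false_r; simpl; lia|rewrite sum_const; lia].
Qed.

Lemma bad_bound (q : nat -> bool) s n : NoDup s ->
  cntb (fun o => forallb q o && negb (nodupb o)) (tuples s (S n)) <= (S n) * (S n) * (cntb q s) ^ n.
Proof.
  intros Hs. induction n.
  - simpl. unfold cntb. simpl. induction s; simpl; auto.
    rewrite Bool.andb_true_r. simpl. inversion Hs; subst. specialize (IHs H2).
    destruct (q a); simpl in *; lia.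
  - eapply Nat.le_trans. apply bad_rec; auto.
    set (c := cntb q s) in *. simpl (c ^ S n).
    eapply Nat.le_trans. apply Nat.add_le_mono_r. apply Nat.mul_le_mono_l. apply IHn.
    nia.
Qed.

End Comb.
Section CombB.
Local Open Scope nat_scope.

Definition cw (A : nat -> bool) (T t : nat) : nat := cntb (fun x => A (t + x)) (seq 1 T).

Lemma chg_bound (A : nat -> bool) h g Y o : Chg h g A ->
  length o = h -> NoDup o -> (forall x, In x o -> 1 <= x) ->
  cntb (fun t => forallb (fun x => A (t + x)) o) (seq 0 Y) < g.
Proof.
  intros HC Lo Do Po. rewrite cntb_len.
  set (K := filter _ (seq 0 Y)).
  destruct (Nat.lt_ge_cases (length K) g) as [H|H]; auto. exfalso.
  assert (DK : NoDup K) by (apply NoDup_filter, seq_NoDup).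
  pose proof (firstn_skipn g K) as FS.
  apply (HC (map Z.of_nat o) (map Z.of_nat (firstn g K))).
  - apply FinFun.Injective_map_NoDup; auto. intros a b; lia.
  - rewrite length_map; auto.
  - apply FinFun.Injective_map_NoDup. intros a b; lia.
    rewrite <- FS in DK. eapply NoDup_app_remove_r; eauto.
  - rewrite length_map. apply firstn_length_le; auto.
  - intros k x Hk Hx. apply in_map_iff in Hk as [k' [<- Hk']].
    apply in_map_iff in Hx as [x' [<- Hx']].
    assert (Hk2 : In k' K) by (rewrite <- FS; apply in_or_app; auto).
    apply filter_In in Hk2 as [_ Hf]. rewrite forallb_forall in Hf.
    specialize (Hf x' Hx'). specialize (Po x' Hx'). split. lia.
    replace (Z.to_nat (Z.of_nat x' + Z.of_nat k')) with (k' + x') by lia. auto.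
Qed.

Lemma good_sum (A : nat -> bool) h g T Y : Chg h g A ->
  list_sum (map (fun t => cntb (fun o => forallb (fun x => A (t + x)) o && nodupb o)
                           (tuples (seq 1 T) h)) (seq 0 Y)) <= g * T ^ h.
Proof.
  intros HC. unfold cntb at 1. rewrite sum_swap.
  eapply Nat.le_trans. apply sum_le with (g := fun _ => g).
  - intros o Ho. destruct (tuples_elem _ _ _ Ho) as [L I].
    destruct (nodupb o) eqn:E.
    + apply Nat.lt_le_incl. eapply Nat.le_lt_trans; [|apply (chg_bound A h g Y o HC L (nodupb_NoDup _ E))].
      * apply sum_le. intros t _. destruct (forallb _ o); simpl; lia.
      * intros x Hx. apply I in Hx. apply in_seq in Hx. lia.
    + eapply Nat.le_trans; [apply sum_le with (g := fun _ => 0)|]; [intros t _; rewrite Bool.andb_false_r; simpl; lia|rewrite sum_const; lia].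
  - rewrite sum_const. apply Nat.mul_le_mono_l.
    pose proof (cnt_all (fun _ => true) (seq 1 T) h) as E.
    rewrite !cntb_len in E. rewrite (filter_ext _ (fun _ => true)) in E by (intros; apply forallb_forall; auto).
    rewrite !filter_true in E. rewrite length_seq in E. lia.
Qed.

Lemma pow_trade c n h : 2 * (h * h) * c ^ n <= c ^ S n + (2 * (h * h)) ^ S n.
Proof.
  rewrite !Nat.pow_succ_r'.
  destruct (Nat.le_gt_cases (2*(h*h)) c) as [H|H].
  - assert (c * c^n >= 2*(h*h) * c^n) by (apply Nat.mul_le_mono_r; lia). lia.
  - assert (c ^ n <= (2*(h*h)) ^ n) by (apply Nat.pow_le_mono_l; lia).
    assert (2*(h*h) * c^n <= 2*(h*h)*(2*(h*h))^n) by (apply Nat.mul_le_mono_l; lia). lia.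
Qed.

Lemma core (A : nat -> bool) h g T Y : 1 <= h -> Chg h g A ->
  list_sum (map (fun t => cw A T t ^ h) (seq 0 Y)) <= 2 * g * T ^ h + Y * (2 * (h * h)) ^ h.
Proof.
  intros Hh HC.
  eapply Nat.le_trans. apply sum_le with (g := fun t => 2 * cntb (fun o => forallb (fun x => A (t + x)) o && nodupb o)
                           (tuples (seq 1 T) h) + (2 * (h * h)) ^ h).
  - intros t _. unfold cw. rewrite <- cnt_all.
    rewrite (cntb_split _ nodupb).
    destruct h as [|n]; [lia|].
    pose proof (bad_bound (fun x => A (t + x)) (seq 1 T) n (seq_NoDup _ _)) as Hb.
    pose proof (pow_trade (cntb (fun x => A (t + x)) (seq 1 T)) n (S n)).
    pose proof (cnt_all (fun x => A (t + x)) (seq 1 T) (S n)) as E.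
    rewrite (cntb_split _ nodupb) in E. lia.
  - rewrite sum_add, sum_scal, sum_const, length_seq.
    pose proof (good_sum A h g T Y HC). nia.
Qed.

End CombB.

Fixpoint sumn (f : nat -> R) (n : nat) : R :=
  match n with O => 0 | S n => sumn f n + f n end.

Lemma sumn_ext f g n : (forall i, (i < n)%nat -> f i = g i) -> sumn f n = sumn g n.
Proof. induction n; simpl; intros; auto. rewrite IHn, H; auto. Qed.

Lemma sumn_le f g n : (forall i, (i < n)%nat -> f i <= g i) -> sumn f n <= sumn g n.
Proof. induction n; simpl; intros; [lra|]. assert (f n <= g n) by auto.
  assert (sumn f n <= sumn g n) by auto. lra. Qed.

Lemma sumn_nonneg f n : (forall i, (i < n)%nat -> 0 <= f i) -> 0 <= sumn f n.
Proof. intros H. replace 0 with (sumn (fun _ => 0) n). apply sumn_le; auto.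
  induction n; simpl; auto. rewrite IHn; auto; lra. Qed.

Lemma sumn_add f g n : sumn (fun i => f i + g i) n = sumn f n + sumn g n.
Proof. induction n; simpl; auto. lra. rewrite IHn. lra. Qed.

Lemma sumn_scal c f n : sumn (fun i => c * f i) n = c * sumn f n.
Proof. induction n; simpl; auto. lra. rewrite IHn. lra. Qed.

Lemma sumn_const c n : sumn (fun _ => c) n = INR n * c.
Proof. induction n; simpl sumn; auto. simpl; lra. rewrite IHn, S_INR. lra. Qed.

Lemma sumn_split f a b : sumn f (a + b) = sumn f a + sumn (fun i => f (a + i)%nat) b.
Proof. induction b; simpl. rewrite Nat.add_0_r; lra. rewrite Nat.add_succ_r. simpl. rewrite IHb. lra. Qed.

Lemma sumn_mono_n f a b : (forall i, 0 <= f i) -> (a <= b)%nat -> sumn f a <= sumn f b.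
Proof. intros H Hab. replace b with (a + (b - a))%nat by lia. rewrite sumn_split.
  assert (0 <= sumn (fun i => f (a + i)%nat) (b - a)) by (apply sumn_nonneg; auto). lra. Qed.

Lemma INR_sum (F : nat -> nat) n : INR (list_sum (map F (seq 0 n))) = sumn (fun i => INR (F i)) n.
Proof. induction n. simpl; auto. rewrite seq_S, map_app, list_sum_app, plus_INR. simpl sumn.
  rewrite IHn. simpl. rewrite Nat.add_0_r. lra. Qed.

Definition indR (P : bool) : R := if P then 1 else 0.

Lemma INR_cntb (P : nat -> bool) a n : INR (cntb P (seq a n)) = sumn (fun i => indR (P (a + i)%nat)) n.
Proof. induction n. simpl; auto. rewrite seq_S, cntb_app, plus_INR, IHn. simpl sumn.
  unfold cntb, indR; simpl. destruct (P (a+n)%nat); simpl; lra. Qed.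

Lemma indR_nonneg b : 0 <= indR b.
Proof. destruct b; simpl; lra. Qed.

Lemma cheb_id (v z : nat -> R) c m n :
  sumn (fun i => v i * ((z i - c) * (z i ^ m - c ^ m))) n =
  sumn (fun i => v i * z i ^ S m) n + c ^ S m * sumn v n - c ^ m * sumn (fun i => v i * z i) n
  - c * sumn (fun i => v i * z i ^ m) n.
Proof. induction n; simpl; [ring|]. rewrite IHn. simpl. ring. Qed.

Lemma prod_nonneg a c m : 0 <= a -> 0 <= c -> 0 <= (a - c) * (a ^ m - c ^ m).
Proof.
  intros Ha Hc. destruct (Rle_dec a c) as [H|H].
  - assert (a ^ m <= c ^ m) by (apply pow_incr; lra).
    replace ((a - c) * (a ^ m - c ^ m)) with ((c - a) * (c ^ m - a ^ m)) by ring. apply Rmult_le_pos; lra.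
  - assert (c ^ m <= a ^ m) by (apply pow_incr; lra).
    apply Rmult_le_pos; lra.
Qed.

Lemma cheb (v z : nat -> R) m n : (forall i, 0 <= v i) -> (forall i, 0 <= z i) ->
  sumn (fun i => v i * z i) n * sumn (fun i => v i * z i ^ m) n <=
  sumn v n * sumn (fun i => v i * z i ^ S m) n.
Proof.
  intros Hv Hz. induction n; simpl; [lra|].
  pose proof (cheb_id v z (z n) m n) as E.
  assert (0 <= sumn (fun i => v i * ((z i - z n) * (z i ^ m - z n ^ m))) n).
  { apply sumn_nonneg. intros i _. apply Rmult_le_pos; auto. apply prod_nonneg; auto. }
  simpl in E.
  set (P0 := sumn v n) in *. set (P1 := sumn (fun i => v i * z i) n) in *.
  set (Pm := sumn (fun i => v i * z i ^ m) n) in *.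
  set (Pm1 := sumn (fun i => v i * (z i * z i ^ m)) n) in *.
  assert (0 <= v n) by auto.
  assert (v n * (P1 * z n ^ m + z n * Pm) <= v n * (P0 * (z n * z n ^ m) + Pm1)).
  { apply Rmult_le_compat_l; auto. lra. }
  simpl in IHn. fold P0 P1 Pm Pm1 in IHn. nra.
Qed.

Lemma jensen (v z : nat -> R) k n : (forall i, 0 <= v i) -> (forall i, 0 <= z i) ->
  (sumn (fun i => v i * z i) n) ^ S k <= (sumn v n) ^ k * sumn (fun i => v i * z i ^ S k) n.
Proof.
  intros Hv Hz. induction k.
  - simpl. rewrite Rmult_1_r, Rmult_1_l. apply Req_le. apply sumn_ext. intros; ring.
  - assert (0 <= sumn (fun i => v i * z i) n) by (apply sumn_nonneg; intros; apply Rmult_le_pos; auto).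
    assert (0 <= sumn v n) by (apply sumn_nonneg; auto).
    pose proof (cheb v z (S k) n Hv Hz).
    change ((sumn (fun i => v i * z i) n) ^ S (S k)) with (sumn (fun i => v i * z i) n * (sumn (fun i => v i * z i) n) ^ S k).
    apply Rle_trans with (sumn (fun i => v i * z i) n * (sumn v n ^ k * sumn (fun i => v i * z i ^ S k) n)).
    { apply Rmult_le_compat_l; auto. }
    assert (0 <= sumn v n ^ k) by (apply pow_le; auto).
    apply Rle_trans with (sumn v n ^ k * (sumn (fun i => v i * z i) n * sumn (fun i => v i * z i ^ S k) n)).
    { right; ring. }
    apply Rle_trans with (sumn v n ^ k * (sumn v n * sumn (fun i => v i * z i ^ S (S k)) n)).
    { apply Rmult_le_compat_l; auto. }
    simpl; right; ring.
Qed.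

Lemma sumn_swap (f : nat -> nat -> R) a b :
  sumn (fun t => sumn (f t) b) a = sumn (fun x => sumn (fun t => f t x) a) b.
Proof. induction a; simpl. { induction b; simpl; auto; lra. }
  rewrite IHa. rewrite <- sumn_add. auto. Qed.

Lemma INR_cw A T t : INR (cw A T t) = sumn (fun i => indR (A (t + (1 + i))%nat)) T.
Proof. unfold cw. rewrite INR_cntb. apply sumn_ext; intros. reflexivity. Qed.

Lemma shift_sum (G : nat -> R) s T Y : (forall a, 0 <= G a) -> (s <= T)%nat -> (T <= Y)%nat ->
  sumn (fun i => G (T + i)%nat) (Y - T) <= sumn (fun t => G (t + s)%nat) Y.
Proof.
  intros HG H1 H2. replace Y with ((T - s) + (Y - (T - s)))%nat at 2 by lia.
  rewrite sumn_split.
  assert (0 <= sumn (fun t => G (t + s)%nat) (T - s)) by (apply sumn_nonneg; auto).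
  assert (sumn (fun i => G (T + i)%nat) (Y - T) <= sumn (fun i => G (T - s + i + s)%nat) (Y - (T - s))).
  { apply Rle_trans with (sumn (fun i => G (T + i)%nat) (Y - (T - s))).
    apply sumn_mono_n; auto; lia. right. apply sumn_ext. intros. f_equal. lia. }
  lra.
Qed.

Lemma window (A : nat -> bool) (w : nat -> R) T Y :
  (forall a, 0 <= w a) -> (forall a b, (a <= b)%nat -> w b <= w a) -> (T <= Y)%nat ->
  INR T * sumn (fun i => w (T + i)%nat * indR (A (T + i)%nat)) (Y - T) <=
  sumn (fun t => INR (cw A T t) * w t) Y.
Proof.
  intros Hw Ha HTY.
  apply Rle_trans with (sumn (fun t => sumn (fun x => w t * indR (A (t + (1 + x))%nat)) T) Y).
  2:{ right. apply sumn_ext. intros t _. rewrite INR_cw, Rmult_comm, <- sumn_scal. auto. }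
  rewrite sumn_swap. rewrite <- sumn_const.
  apply sumn_le. intros x Hx.
  apply Rle_trans with (sumn (fun t => w (t + (1 + x))%nat * indR (A (t + (1 + x))%nat)) Y).
  - apply shift_sum with (G := fun a => w a * indR (A a)); auto; try lia.
    intros; apply Rmult_le_pos; auto; apply indR_nonneg.
  - apply sumn_le. intros t _. apply Rmult_le_compat_r. apply indR_nonneg. apply Ha. lia.
Qed.

Lemma pow_le1 (r : R) n : 0 <= r <= 1 -> r ^ n <= 1.
Proof. intros Hr; induction n; simpl; [lra|]. assert (0 <= r ^ n) by (apply pow_le; lra). nra. Qed.

Lemma pow_anti (r : R) m n : 0 <= r <= 1 -> (m <= n)%nat -> r ^ n <= r ^ m.
Proof.
  intros Hr H. replace n with (m + (n - m))%nat by lia. rewrite pow_add.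
  assert (0 <= r ^ m) by (apply pow_le; lra).
  assert (r ^ (n - m) <= 1) by (apply pow_le1; lra). nra.
Qed.

Lemma log2_block J i : (i < 2 ^ J)%nat -> Nat.log2 (2 ^ J + i) = J.
Proof. intros H. apply Nat.log2_unique' with i; lia. Qed.

Lemma v_sum J : sumn (fun t => (/ 2) ^ Nat.log2 t) (2 ^ J) = INR J + 1.
Proof.
  induction J. simpl. lra.
  replace (2 ^ S J)%nat with (2 ^ J + 2 ^ J)%nat by (simpl; lia).
  rewrite sumn_split, IHJ.
  rewrite (sumn_ext _ (fun _ => (/2) ^ J)) by (intros; rewrite log2_block; auto).
  rewrite sumn_const, S_INR, pow_INR. simpl (INR 2).
  rewrite pow_inv. replace (1+1) with 2 by ring. rewrite Rinv_r. ring. apply pow_nonzero; lra.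
Qed.

Lemma F_split (w : nat -> R) (A : nat -> bool) T J : (T <= 2 ^ J)%nat ->
  sumn (fun i => w (T + i)%nat * indR (A (T + i)%nat)) (2 ^ S J - T) =
  sumn (fun i => w (T + i)%nat * indR (A (T + i)%nat)) (2 ^ J - T) +
  sumn (fun i => w (2 ^ J + i)%nat * indR (A (2 ^ J + i)%nat)) (2 ^ J).
Proof.
  intros H. replace (2 ^ S J - T)%nat with ((2 ^ J - T) + 2 ^ J)%nat by (simpl; lia).
  rewrite sumn_split. f_equal. apply sumn_ext; intros. replace (T + (2 ^ J - T + i))%nat with (2 ^ J + i)%nat by lia.
  auto.
Qed.

Lemma count_R (A : nat -> bool) n : INR (count_upto A n) = sumn (fun i => indR (A (1 + i)%nat)) n.
Proof. unfold count_upto. rewrite <- cntb_len. apply INR_cntb. Qed.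

Lemma cnt_block (A : nat -> bool) J :
  INR (count_upto A (2 ^ S J - 1)) = INR (count_upto A (2 ^ J - 1)) + sumn (fun i => indR (A (2 ^ J + i)%nat)) (2 ^ J).
Proof.
  rewrite !count_R. assert (1 <= 2 ^ J)%nat by (pose proof (Nat.pow_le_mono_r 2 0 J); simpl in *; lia).
  replace (2 ^ S J - 1)%nat with ((2 ^ J - 1) + 2 ^ J)%nat by (simpl; lia).
  rewrite sumn_split. f_equal. apply sumn_ext; intros. f_equal. f_equal. lia.
Qed.

Definition Bc (h : nat) : R := INR ((2 * (h * h)) ^ h).

Lemma core_R (A : nat -> bool) h g T Y : (1 <= h)%nat -> Chg h g A ->
  sumn (fun t => INR (cw A T t) ^ h) Y <= 2 * INR g * INR T ^ h + INR Y * Bc h.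
Proof.
  intros Hh HC. pose proof (core A h g T Y Hh HC) as H. apply le_INR in H.
  rewrite INR_sum in H. unfold Bc. rewrite plus_INR, !mult_INR, pow_INR in H.
  replace (INR 2) with 2 in H by (simpl; ring).
  eapply Rle_trans; [|apply H].
  right. apply sumn_ext. intros. symmetry; apply pow_INR.
Qed.

Lemma pow_lt_mono a b n : 0 <= a < b -> a ^ S n < b ^ S n.
Proof.
  intros H. induction n. simpl; lra.
  change (a ^ S (S n)) with (a * a ^ S n). change (b ^ S (S n)) with (b * b ^ S n).
  assert (0 <= a ^ S n) by (apply pow_le; lra). nra.
Qed.

Lemma pow_ge_inv a b n : 0 <= a -> 0 <= b -> b ^ S n <= a ^ S n -> b <= a.
Proof. intros Ha Hb H. destruct (Rle_dec b a); auto.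
  assert (a ^ S n < b ^ S n) by (apply pow_lt_mono; lra). lra. Qed.

Section Main.
Variables (A : nat -> bool) (g k : nat) (rho : R).
Hypothesis Hk : (1 <= k)%nat.
Hypothesis HC : Chg (S k) g A.
Hypothesis Hr0 : 0 < rho.
Hypothesis Hr1 : rho < 1.
Hypothesis Hrh : rho ^ S k = (/ 2) ^ k.

Definition Ap (i : nat) : R := INR (count_upto A (2 ^ i - 1)).
Definition mb (i : nat) : R := sumn (fun j => indR (A (2 ^ i + j)%nat)) (2 ^ i).

Lemma mb_nonneg i : 0 <= mb i.
Proof. apply sumn_nonneg; intros; apply indR_nonneg. Qed.

Lemma Ap_succ i : Ap (S i) = Ap i + mb i.
Proof. unfold Ap, mb. apply cnt_block. Qed.

Lemma pow2_pos i : (1 <= 2 ^ i)%nat.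
Proof. pose proof (Nat.pow_le_mono_r 2 0 i); simpl in *; lia. Qed.

Lemma rho_pow_i i : (rho ^ i) ^ S k = / (2 ^ i) ^ k.
Proof.
  rewrite <- pow_mult, Nat.mul_comm, pow_mult, Hrh, <- pow_mult, pow_inv, <- pow_mult.
  rewrite Nat.mul_comm. auto.
Qed.

Definition K3 : R := 2 ^ k * (2 * INR g + 2 * Bc (S k)).

Lemma mb_bound i : (rho ^ i * mb i) ^ S k <= K3.
Proof.
  set (T := (2 ^ i)%nat). set (Y := (2 ^ S i)%nat).
  assert (HT : (1 <= T)%nat) by apply pow2_pos.
  assert (HY : Y = (2 * T)%nat) by (unfold Y, T; simpl; lia).
  pose proof (window A (fun _ => 1) T Y ltac:(intros; lra) ltac:(intros; lra) ltac:(lia)) as W.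
  assert (E : sumn (fun i0 => 1 * indR (A (T + i0)%nat)) (Y - T) = mb i).
  { unfold mb. replace (Y - T)%nat with T by lia. apply sumn_ext. intros; rewrite Rmult_1_l; reflexivity. }
  cbv beta in W.
  rewrite E in W.
  pose proof (jensen (fun _ => 1) (fun t => INR (cw A T t)) k Y ltac:(intros; lra) ltac:(intros; apply pos_INR)) as J.
  pose proof (core_R A (S k) g T Y ltac:(lia) HC) as Co.
  rewrite sumn_const, Rmult_1_r in J.
  rewrite (sumn_ext (fun i0 => 1 * INR (cw A T i0) ^ S k) (fun t => INR (cw A T t) ^ S k)) in J by (intros; ring).
  rewrite (sumn_ext (fun t => INR (cw A T t) * 1) (fun i0 => 1 * INR (cw A T i0))) in W by (intros; ring).
  assert (0 <= INR T * mb i) by (apply Rmult_le_pos; [apply pos_INR|apply mb_nonneg]).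
  assert (P1 : (INR T * mb i) ^ S k <= INR Y ^ k * (2 * INR g * INR T ^ S k + INR Y * Bc (S k))).
  { eapply Rle_trans. apply pow_incr. split; eauto. eapply Rle_trans. apply J.
    apply Rmult_le_compat_l. apply pow_le, pos_INR. auto. }
  rewrite HY, mult_INR in P1. simpl (INR 2) in P1.
  assert (HTR : 1 <= INR T) by (apply (le_INR 1); auto).
  assert (Tk : INR T <= INR T ^ S k).
  { simpl. rewrite <- (Rmult_1_r (INR T)) at 1. apply Rmult_le_compat_l. lra. apply pow_R1_Rle. lra. }
  assert (0 <= Bc (S k)) by apply pos_INR.
  assert (0 <= INR g) by apply pos_INR.
  assert (P2 : (INR T * mb i) ^ S k <= INR T ^ k * INR T ^ S k * K3).
  { eapply Rle_trans. apply P1. unfold K3. rewrite Rpow_mult_distr.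
    replace (2 * INR T * Bc (S k)) with (2 * Bc (S k) * INR T) by ring.
    assert (2 * Bc (S k) * INR T <= 2 * Bc (S k) * INR T ^ S k) by (apply Rmult_le_compat_l; lra).
    assert (0 <= (1+1)^k) by (apply pow_le; lra).
    assert (0 <= INR T ^ k) by (apply pow_le; lra).
    replace (1+1) with 2 by ring.
    assert (0 <= 2 ^ k * INR T ^ k) by (apply Rmult_le_pos; apply pow_le; lra).
    apply Rle_trans with (2 ^ k * INR T ^ k * (2 * INR g * INR T ^ S k + 2 * Bc (S k) * INR T ^ S k)).
    apply Rmult_le_compat_l; auto; lra. right; ring. }
  rewrite Rpow_mult_distr in P2.
  rewrite Rpow_mult_distr, rho_pow_i.
  assert (Q1 : 0 < INR T ^ S k) by (apply pow_lt; lra).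
  assert (Q2 : 0 < (2 ^ i) ^ k) by (apply pow_lt, pow_lt; lra).
  assert (Q3 : INR T = 2 ^ i) by (unfold T; rewrite pow_INR; simpl; f_equal; ring).
  rewrite Q3 in P2, Q1.
  apply Rmult_le_reg_l with ((2 ^ i) ^ k); auto.
  rewrite <- Rmult_assoc, Rinv_r by lra. rewrite Rmult_1_l.
  apply Rmult_le_reg_l with ((2 ^ i) ^ S k); auto.
  apply Rle_trans with ((2 ^ i) ^ k * (2 ^ i) ^ S k * K3); [|right; ring].
  exact P2.
Qed.

Lemma K3_nonneg : 0 <= K3.
Proof. unfold K3. apply Rmult_le_pos. apply pow_le; lra.
  assert (0 <= INR g) by apply pos_INR. assert (0 <= Bc (S k)) by apply pos_INR. lra. Qed.

Lemma xb_bound i : rho ^ i * mb i <= K3 + 1.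
Proof.
  pose proof (mb_bound i). pose proof K3_nonneg.
  assert (0 <= rho ^ i * mb i) by (apply Rmult_le_pos; [apply pow_le; lra|apply mb_nonneg]).
  destruct (Rle_dec (rho ^ i * mb i) 1). lra.
  assert (rho ^ i * mb i <= (rho ^ i * mb i) ^ S k).
  { simpl. rewrite <- (Rmult_1_r (rho ^ i * mb i)) at 1. apply Rmult_le_compat_l. lra.
    apply pow_R1_Rle. lra. }
  lra.
Qed.

Lemma Ap0 : Ap 0 = 0.
Proof. reflexivity. Qed.

Lemma Ap_nonneg i : 0 <= Ap i.
Proof. apply pos_INR. Qed.

Definition K4 : R := (K3 + 1) * (rho / (1 - rho)).

Lemma Ap_bound p : rho ^ p * Ap p <= K4.
Proof.
  unfold K4. pose proof K3_nonneg.
  assert (0 <= rho / (1 - rho)) by (apply Rmult_le_pos; [lra|apply Rlt_le, Rinv_0_lt_compat; lra]).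
  induction p. rewrite Ap0. rewrite Rmult_0_r. apply Rmult_le_pos; lra.
  rewrite Ap_succ. pose proof (xb_bound p).
  apply Rle_trans with (rho * (rho ^ p * Ap p + rho ^ p * mb p)). right; simpl; ring.
  apply Rle_trans with (rho * ((K3 + 1) * (rho / (1 - rho)) + (K3 + 1))).
  apply Rmult_le_compat_l; lra.
  right. field. lra.
Qed.

Definition Fw (p Y : nat) : R :=
  sumn (fun i => rho ^ Nat.log2 (2 ^ p + i) * indR (A (2 ^ p + i)%nat)) (Y - 2 ^ p).

Lemma abel p d :
  Fw p (2 ^ (p + d)) - (/ rho - 1) * sumn (fun j => rho ^ (p + 1 + j) * Ap (p + 1 + j)) d
  + rho ^ p * Ap p = rho ^ (p + d) * Ap (p + d).
Proof.
  induction d.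
  - unfold Fw. rewrite Nat.add_0_r, Nat.sub_diag. simpl. ring.
  - unfold Fw in *. rewrite Nat.add_succ_r.
    rewrite (F_split (fun a => rho ^ Nat.log2 a) A (2 ^ p) (p + d)).
    2:{ apply Nat.pow_le_mono_r; lia. }
    rewrite (sumn_ext (fun i => rho ^ Nat.log2 (2 ^ (p + d) + i) * indR (A (2 ^ (p + d) + i)%nat))
               (fun i => rho ^ (p + d) * indR (A (2 ^ (p + d) + i)%nat))).
    2:{ intros. rewrite log2_block; auto. }
    rewrite sumn_scal. fold (mb (p + d)).
    simpl sumn.
    replace (p + 1 + d)%nat with (S (p + d)) by lia.
    replace (p + S d)%nat with (S (p + d)) by lia.
    rewrite Ap_succ.
    change (rho ^ S (p + d)) with (rho * rho ^ (p + d)).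
    set (F0 := sumn (fun i => rho ^ Nat.log2 (2 ^ p + i) * indR (A (2 ^ p + i)%nat)) (2 ^ (p + d) - 2 ^ p)) in *.
    set (S0 := sumn (fun j => rho ^ (p + 1 + j) * Ap (p + 1 + j)) d) in *.
    set (x := rho ^ (p + d)) in *.
    assert (F0 = x * Ap (p + d) + (/ rho - 1) * S0 - rho ^ p * Ap p) by lra.
    rewrite H. field. lra.
Qed.

Definition K1 : R := 2 * INR g + Bc (S k).
Definition th : R := (/ rho - 1) / 4.
Definition Cc : R := 4 * K1 / th + 1.

Lemma th_pos : 0 < th.
Proof. unfold th. assert (1 < / rho). { rewrite <- Rinv_1. apply Rinv_lt_contravar; lra. } lra. Qed.

Lemma K1_ge1 : 1 <= K1.
Proof. unfold K1, Bc. assert (0 <= INR g) by apply pos_INR.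
  assert (1 <= INR ((2 * (S k * S k)) ^ S k)).
  { apply (le_INR 1). apply Nat.pow_le_mono_l with (c := S k) (a := 1%nat) in Hk as _; 
    pose proof (Nat.pow_le_mono_l 1 (2 * (S k * S k)) (S k)). rewrite Nat.pow_1_l in H0. apply H0; lia. }
  lra. Qed.

Lemma thC : 4 * K1 < th * Cc.
Proof. unfold Cc. pose proof th_pos. field_simplify; [|lra]. lra. Qed.

Lemma vz1 (c r : R) n : (/ 2) ^ n * (c * (2 * r) ^ n) = c * r ^ n.
Proof. rewrite Rmult_comm, Rmult_assoc, <- Rpow_mult_distr.
  replace ((2 * r) * / 2) with r by field. auto. Qed.

Lemma two_rho : (2 * rho) ^ S k = 2.
Proof. rewrite Rpow_mult_distr, Hrh. simpl (2 ^ S k). rewrite Rmult_assoc, <- Rpow_mult_distr.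
  replace (2 * / 2) with 1 by field. rewrite pow1. ring. Qed.

Lemma vz2 (c : R) n : (/ 2) ^ n * (c * (2 * rho) ^ n) ^ S k = c ^ S k.
Proof. rewrite Rpow_mult_distr, <- pow_mult, Nat.mul_comm, pow_mult, two_rho.
  rewrite Rmult_comm, Rmult_assoc, <- Rpow_mult_distr. replace (2 * / 2) with 1 by field.
  rewrite pow1; ring. Qed.


Lemma ln2_lt1 : ln 2 < 1.
Proof. pose proof (exp_ineq1 1 ltac:(lra)). rewrite <- (ln_exp 1). apply ln_increasing; lra. Qed.

Lemma ln2_pos : 0 < ln 2.
Proof. pose proof ln_lt_2. lra. Qed.

Lemma hyp_lower (C : R) j : 0 <= C ->
  (C ^ S k * INR (2 ^ j - 1) ^ k <= Ap j ^ S k * ln (INR (2 ^ j - 1))) -> (2 <= j)%nat ->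
  C ^ S k * (/ 2) ^ k / INR j <= (rho ^ j * Ap j) ^ S k.
Proof.
  intros HC0 HN Hj.
  assert (P4 : 4 <= 2 ^ j) by (replace 4 with (2 ^ 2) by ring; apply Rle_pow; lra || lia).
  assert (EN : INR (2 ^ j - 1) = 2 ^ j - 1).
  { rewrite minus_INR, pow_INR. replace (INR 2) with 2 by (simpl; ring). reflexivity. pose proof (pow2_pos j); lia. }
  rewrite EN in HN.
  assert (Hln : ln (2 ^ j - 1) <= INR j).
  { apply Rle_trans with (ln (2 ^ j)). left. apply ln_increasing; lra.
    rewrite ln_pow by lra. pose proof ln2_lt1. pose proof ln2_pos. pose proof (pos_INR j). nra. }
  assert (Hk2 : (2 ^ j / 2) ^ k <= (2 ^ j - 1) ^ k) by (apply pow_incr; lra).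
  assert (a0 : 0 <= Ap j ^ S k) by (apply pow_le, Ap_nonneg).
  assert (c0 : 0 <= C ^ S k) by (apply pow_le; auto).
  assert (key : C ^ S k * (2 ^ j / 2) ^ k <= Ap j ^ S k * INR j).
  { apply Rle_trans with (C ^ S k * (2 ^ j - 1) ^ k). apply Rmult_le_compat_l; auto.
    apply Rle_trans with (Ap j ^ S k * ln (2 ^ j - 1)); auto. apply Rmult_le_compat_l; auto. }
  rewrite Rpow_mult_distr, rho_pow_i.
  assert (D0 : 0 < (2 ^ j) ^ k) by (apply pow_lt; lra).
  assert (j0 : 0 < INR j) by (apply lt_0_INR; lia).
  apply Rmult_le_reg_r with ((2 ^ j) ^ k * INR j). apply Rmult_lt_0_compat; auto.
  replace (C ^ S k * (/ 2) ^ k / INR j * ((2 ^ j) ^ k * INR j)) with (C ^ S k * (2 ^ j / 2) ^ k).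
  2:{ unfold Rdiv. rewrite (Rpow_mult_distr (2 ^ j)). field. lra. }
  replace (/ (2 ^ j) ^ k * Ap j ^ S k * ((2 ^ j) ^ k * INR j)) with (Ap j ^ S k * INR j) by (field; lra).
  auto.
Qed.


Lemma exists_nat (x : R) : exists n : nat, x < INR n.
Proof.
  destruct (archimed x) as [H1 _].
  destruct (Z_lt_le_dec (up x) 0).
  - exists 0%nat. simpl. apply IZR_lt in l. lra.
  - exists (Z.to_nat (up x)). rewrite INR_IZR_INZ, Z2Nat.id; auto.
Qed.

Lemma K4_nonneg : 0 <= K4.
Proof. unfold K4. pose proof K3_nonneg.
  apply Rmult_le_pos. lra. apply Rmult_le_pos; [lra|apply Rlt_le, Rinv_0_lt_compat; lra]. Qed.

Lemma main_contra (N0 : nat) :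
  (forall N, (N0 <= N)%nat -> Cc ^ S k * INR N ^ k <= INR (count_upto A N) ^ S k * ln (INR N)) -> False.
Proof.
  intros Hyp.
  pose proof th_pos as Th. pose proof K1_ge1 as HK1. pose proof thC as HthC. pose proof K4_nonneg as HK4.
  destruct (exists_nat (2 ^ k * K4 ^ S k)) as [P0 HP0].
  set (p := S (N0 + P0)).
  set (J := (S k * p)%nat). set (T := (2 ^ p)%nat). set (Y := (2 ^ J)%nat).
  assert (HpJ : (p <= J)%nat) by (unfold J; nia).
  assert (Hp1 : (1 <= p)%nat) by (unfold p; lia).
  assert (HN0 : (N0 < 2 ^ p)%nat).
  { pose proof (Nat.pow_gt_lin_r 2 p ltac:(lia)). unfold p in *; lia. }
  assert (HJR : 2 ^ k * K4 ^ S k < INR J).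
  { apply Rlt_le_trans with (INR P0); auto. apply le_INR. unfold J, p. nia. }
  assert (J0 : 0 < INR J) by (apply lt_0_INR; unfold J; nia).
  assert (HYT : INR Y = INR T ^ S k).
  { unfold Y, T, J. rewrite <- pow_INR. f_equal. rewrite <- Nat.pow_mul_r. f_equal. lia. }
  assert (T1 : 1 <= INR T) by (apply (le_INR 1); apply pow2_pos).
  assert (HTY : (T <= Y)%nat) by (unfold T, Y; apply Nat.pow_le_mono_r; lia).
  assert (C0 : 0 < Cc) by (unfold Cc; apply Rplus_lt_le_0_compat; [|lra];
     unfold Rdiv; apply Rmult_lt_0_compat; [lra|apply Rinv_0_lt_compat; lra]).
  set (Z := Cc ^ S k * (/ 2) ^ k / INR J).
  assert (Z0 : 0 < Z).
  { unfold Z. unfold Rdiv. apply Rmult_lt_0_compat. apply Rmult_lt_0_compat. apply pow_lt; lra.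
    apply pow_lt; lra. apply Rinv_0_lt_compat; lra. }
  set (y := Rpower Z (/ INR (S k))).
  assert (y0 : 0 < y) by (unfold y, Rpower; apply exp_pos).
  assert (yh : y ^ S k = Z).
  { unfold y. rewrite <- Rpower_pow by (unfold Rpower; apply exp_pos).
    rewrite Rpower_mult, Rinv_l, Rpower_1; auto. apply not_0_INR; lia. }
  assert (Xj : forall j, (p < j <= J)%nat -> y <= rho ^ j * Ap j).
  { intros j Hj. apply pow_ge_inv with k.
    apply Rmult_le_pos; [apply pow_le; lra|apply Ap_nonneg]. lra.
    rewrite yh. apply Rle_trans with (Cc ^ S k * (/ 2) ^ k / INR j).
    - unfold Z, Rdiv. apply Rmult_le_compat_l.
      apply Rmult_le_pos; apply pow_le; lra.
      apply Rinv_le_contravar. apply lt_0_INR; lia. apply le_INR; lia.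
    - apply hyp_lower. lra. apply Hyp.
      assert (2 ^ p <= 2 ^ j)%nat by (apply Nat.pow_le_mono_r; lia). lia. lia. }
  set (Sm := sumn (fun t => rho ^ (p + 1 + t) * Ap (p + 1 + t)) (J - p)).
  assert (HS : INR (J - p) * y <= Sm).
  { rewrite <- sumn_const. apply sumn_le. intros t Ht. apply Xj. lia. }
  pose proof (abel p (J - p)) as Ab. replace (p + (J - p))%nat with J in Ab by lia.
  fold Sm in Ab. pose proof (Ap_bound p) as Apb.
  assert (FJ0 : 0 <= rho ^ J * Ap J) by (apply Rmult_le_pos; [apply pow_le; lra|apply Ap_nonneg]).
  set (F := Fw p (2 ^ J)) in *.
  assert (HF1 : (/ rho - 1) * Sm - K4 <= F) by lra.
  set (X := sumn (fun t => INR (cw A T t) * rho ^ Nat.log2 t) Y).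
  assert (W : INR T * F <= X).
  { exact (window A (fun a => rho ^ Nat.log2 a) T Y (fun a => pow_le _ _ (Rlt_le _ _ Hr0))
      (fun a b Hab => pow_anti rho _ _ ltac:(lra) (Nat.log2_le_mono _ _ Hab)) HTY). }
  pose proof (jensen (fun t => (/ 2) ^ Nat.log2 t) (fun t => INR (cw A T t) * (2 * rho) ^ Nat.log2 t) k Y
     (fun t => pow_le (/ 2) _ ltac:(lra))
     (fun t => Rmult_le_pos _ _ (pos_INR _) (pow_le (2 * rho) _ ltac:(lra)))) as Jn.
  rewrite (sumn_ext _ (fun t => INR (cw A T t) * rho ^ Nat.log2 t)) in Jn by (intros; apply vz1).
  rewrite (sumn_ext (fun i => (/ 2) ^ Nat.log2 i * (INR (cw A T i) * (2 * rho) ^ Nat.log2 i) ^ S k)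
     (fun t => INR (cw A T t) ^ S k)) in Jn by (intros; apply vz2).
  fold X in Jn. unfold Y in Jn at 1. rewrite v_sum in Jn.
  pose proof (core_R A (S k) g T Y ltac:(lia) HC) as Co.
  rewrite HYT in Co.
  assert (F0 : 0 <= F).
  { unfold F, Fw. apply sumn_nonneg. intros. apply Rmult_le_pos; [apply pow_le; lra|apply indR_nonneg]. }
  assert (Bc0 : 0 <= Bc (S k)) by apply pos_INR.
  assert (Th0 : 0 < INR T ^ S k) by (apply pow_lt; lra).
  assert (Up : F ^ S k <= (INR J + 1) ^ k * K1).
  { assert (H1 : (INR T * F) ^ S k <= (INR J + 1) ^ k * (INR T ^ S k * K1)).
    { eapply Rle_trans. apply pow_incr. split; [apply Rmult_le_pos; lra|apply W].
      eapply Rle_trans. apply Jn. apply Rmult_le_compat_l. apply pow_le. pose proof (pos_INR J); lra.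
      eapply Rle_trans. apply Co. unfold K1. right; ring. }
    rewrite Rpow_mult_distr in H1.
    apply Rmult_le_reg_l with (INR T ^ S k); auto.
    eapply Rle_trans. apply H1. right; ring. }
  assert (HJp : INR J / 2 <= INR (J - p)).
  { rewrite minus_INR by lia. unfold J. rewrite mult_INR, S_INR.
    pose proof (pos_INR p). assert (1 <= INR k) by (apply (le_INR 1); lia). nra. }
  set (u := th * INR J * y).
  assert (uh : u ^ S k = (th * Cc) ^ S k * (/ 2) ^ k * INR J ^ k).
  { unfold u. rewrite !Rpow_mult_distr, yh. unfold Z. change (INR J ^ S k) with (INR J * INR J ^ k). field. lra. }
  set (Q := th * Cc) in *.
  assert (Q1 : 4 <= Q) by lra.
  assert (Qh : 1 <= Q ^ S k) by (apply pow_R1_Rle; lra).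
  assert (Jk : INR J <= INR J ^ k).
  { rewrite <- (pow_1 (INR J)) at 1. apply Rle_pow; auto. apply (le_INR 1). unfold J; nia. }
  assert (i2k : 0 < (/ 2) ^ k) by (apply pow_lt; lra).
  assert (uK4 : K4 <= u).
  { assert (u0 : 0 <= u) by (unfold u; apply Rmult_le_pos; [apply Rmult_le_pos|]; lra).
    apply pow_ge_inv with k. auto. auto.
    rewrite uh. apply Rle_trans with ((/ 2) ^ k * INR J).
    - apply Rle_trans with ((/ 2) ^ k * (2 ^ k * K4 ^ S k)).
      + rewrite <- Rmult_assoc, <- Rpow_mult_distr. replace (/ 2 * 2) with 1 by field. rewrite pow1. lra.
      + apply Rmult_le_compat_l; lra.
    - rewrite Rmult_assoc. rewrite (Rmult_comm (Q ^ S k)). rewrite Rmult_assoc.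
      apply Rmult_le_compat_l. lra.
      rewrite <- (Rmult_1_r (INR J)) at 1. apply Rmult_le_compat; lra. }
  assert (Fu : u <= F).
  { assert (E4 : / rho - 1 = 4 * th) by (unfold th; field; lra). rewrite E4 in HF1.
    assert (0 <= y) by lra.
    assert (4 * th * (INR J / 2 * y) <= 4 * th * Sm).
    { apply Rmult_le_compat_l. lra. eapply Rle_trans; [|apply HS]. apply Rmult_le_compat_r; lra. }
    assert (4 * th * (INR J / 2 * y) = 2 * u) by (unfold u; field). lra. }
  assert (Lo : u ^ S k <= F ^ S k).
  { apply pow_incr. split; auto. unfold u. apply Rmult_le_pos. apply Rmult_le_pos; lra. lra. }
  rewrite uh in Lo.
  assert (J2 : (INR J + 1) ^ k <= 2 ^ k * INR J ^ k).
  { rewrite <- Rpow_mult_distr. apply pow_incr. split. lra. assert (1 <= INR J) by (apply (le_INR 1); unfold J; nia). lra. }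
  assert (Jk0 : 0 < INR J ^ k) by (apply pow_lt; lra).
  assert (Fin : Q ^ S k * (/ 2) ^ k * INR J ^ k <= 2 ^ k * INR J ^ k * K1).
  { eapply Rle_trans. apply Lo. eapply Rle_trans. apply Up. apply Rmult_le_compat_r; lra. }
  assert (Fin2 : Q ^ S k <= 4 ^ k * K1).
  { apply Rmult_le_reg_r with ((/ 2) ^ k * INR J ^ k). apply Rmult_lt_0_compat; auto.
    replace (4 ^ k * K1 * ((/ 2) ^ k * INR J ^ k)) with (2 ^ k * INR J ^ k * K1).
    rewrite <- Rmult_assoc. auto.
    assert (E42 : 4 ^ k * (/ 2) ^ k = 2 ^ k).
    { rewrite <- Rpow_mult_distr. f_equal. field. }
    rewrite <- E42. ring. }
  assert (Lo2 : (4 * K1) ^ S k <= Q ^ S k) by (apply pow_incr; lra).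
  assert (K1h : K1 <= K1 ^ S k) by (rewrite <- (pow_1 K1) at 1; apply Rle_pow; auto; lia).
  rewrite Rpow_mult_distr in Lo2. simpl (4 ^ S k) in Lo2.
  assert (0 < 4 ^ k) by (apply pow_lt; lra).
  nra.
Qed.

End Main.

Theorem theorem3 (g h : nat) (Hh : (2 <= h)%nat) (Hgh : (h <= g)%nat) :
  exists C : R, 0 < C /\
    forall A : nat -> bool,
      A 0%nat = false -> infinite_set A -> Chg h g A ->
      liminf_le
        (fun x => countR A x * Rpower (x * ln x) (1 / INR h) / x) C.
Proof.
  destruct h as [|k]; [lia|].
  assert (Hk : (1 <= k)%nat) by lia.
  set (rho := Rpower (/ 2) (INR k / INR (S k))).
  assert (Hr0 : 0 < rho) by (unfold rho, Rpower; apply exp_pos).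
  assert (Hrh : rho ^ S k = (/ 2) ^ k).
  { unfold rho. rewrite <- Rpower_pow by (unfold Rpower; apply exp_pos).
    rewrite Rpower_mult. replace (INR k / INR (S k) * INR (S k)) with (INR k).
    apply Rpower_pow; lra. field. apply not_0_INR; lia. }
  assert (Hr1 : rho < 1).
  { destruct (Rlt_le_dec rho 1); auto. exfalso.
    assert (1 <= rho ^ S k) by (apply pow_R1_Rle; lra).
    assert ((/ 2) ^ k < 1).
    { destruct k; [lia|]. apply pow_lt_1_compat; [lra|lia]. }
    lra. }
  exists (Cc g k rho). split.
  { pose proof (th_pos rho Hr0 Hr1). pose proof (K1_ge1 g k Hk).
    unfold Cc. assert (0 < 4 * K1 g k / th rho) by (unfold Rdiv; apply Rmult_lt_0_compat; [lra|apply Rinv_0_lt_compat; lra]).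
    lra. }
  intros A A0 Hinf HC eps Heps M.
  destruct (classic (exists x, M < x /\ countR A x * Rpower (x * ln x) (1 / INR (S k)) / x < Cc g k rho + eps)) as [H|H]; auto.
  exfalso.
  destruct (exists_nat M) as [N1 HN1].
  apply (main_contra A g k rho Hk HC Hr0 Hr1 Hrh (N1 + 2)).
  intros N HN.
  assert (MN : M < INR N) by (apply Rlt_le_trans with (INR N1); auto; apply le_INR; lia).
  assert (Hf : Cc g k rho <= countR A (INR N) * Rpower (INR N * ln (INR N)) (1 / INR (S k)) / INR N).
  { destruct (Rle_dec (Cc g k rho) (countR A (INR N) * Rpower (INR N * ln (INR N)) (1 / INR (S k)) / INR N)); auto.
    exfalso. apply H. exists (INR N). split; auto. lra. }
  unfold countR in Hf. rewrite Int_part_INR, Nat2Z.id in Hf.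
  set (c := INR (count_upto A N)) in *. set (x := INR N) in *.
  assert (x2 : 2 <= x) by (unfold x; apply (le_INR 2); lia).
  assert (L0 : 0 < ln x) by (rewrite <- ln_1; apply ln_increasing; lra).
  set (R0 := Rpower (x * ln x) (1 / INR (S k))) in *.
  assert (R0p : 0 < R0) by (unfold R0, Rpower; apply exp_pos).
  assert (R0h : R0 ^ S k = x * ln x).
  { unfold R0. rewrite <- Rpower_pow by (unfold Rpower; apply exp_pos).
    rewrite Rpower_mult. replace (1 / INR (S k) * INR (S k)) with 1. apply Rpower_1. nra.
    field. apply not_0_INR; lia. }
  assert (C0 : 0 <= Cc g k rho).
  { pose proof (th_pos rho Hr0 Hr1). pose proof (K1_ge1 g k Hk).
    unfold Cc. assert (0 < 4 * K1 g k / th rho) by (unfold Rdiv; apply Rmult_lt_0_compat; [lra|apply Rinv_0_lt_compat; lra]).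
    lra. }
  assert (H1 : Cc g k rho * x <= c * R0).
  { apply Rmult_le_reg_r with (/ x). apply Rinv_0_lt_compat; lra.
    replace (Cc g k rho * x * / x) with (Cc g k rho) by (field; lra). exact Hf. }
  assert (H2 : (Cc g k rho * x) ^ S k <= (c * R0) ^ S k).
  { apply pow_incr. split; auto. apply Rmult_le_pos; lra. }
  rewrite !Rpow_mult_distr, R0h in H2.
  change (x ^ S k) with (x * x ^ k) in H2.
  apply Rmult_le_reg_r with x. lra. 
  apply Rle_trans with (Cc g k rho ^ S k * (x * x ^ k)). right; ring.
  eapply Rle_trans. apply H2. right; ring.
Qed.
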